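(* Let $(G,\prec)$ be an $\mathcal{H}$-free ordered graph, let $u\prec v$ be adjacent vertices, and let $X=\{u,v\}\cup\{x\in V(G): u\prec x\prec v,\ ux\in E(G),\ xv\in E(G)\}$. Then $(G[X],\prec|_X)$ is a capped graph.
   Context: An ordered graph is a pair $(G,\prec)$ with $G$ a finite graph and $\prec$ a linear order on $V(G)$. It is capped if for any $a\prec b\prec c\prec d$ with $ac,bd\in E(G)$ we have $ad\in E(G)$. For $a\prec b\prec c\prec d$ with $ac,bd\in E(G)$, $ac$ crosses $bd$. A rotation of $\prec$ is any order obtained by repeatedly making the largest element the smallest. For $p\prec q$, a crossing sequence from $p$ to $q$ is a sequence of distinct edges $e_1,\dots,e_k$ with $p$ the smaller end of $e_1$, $q$ the larger end of $e_k$, and $e_i$ crossing $e_{i+1}$ for $1\le i<k$; if $q\prec p$, a crossing sequence from $p$ to $q$ is one with respect to any rotation $\prec'$ of $\prec$ with $p\prec'q$. $\mathcal{H}$ is the family of ordered graphs containing two non-adjacent vertices $p,q$ with a crossing sequence from $p$ to $q$ and one from $q$ to $p$; $\mathcal{H}$-free means no induced ordered subgraph (induced subgraph with restricted order) lies in $\mathcal{H}$. *)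

(* Defs.v *)
From mathcomp Require Import all_boot.
Set Implicit Arguments. Unset Strict Implicit. Unset Printing Implicit Defensive.

(* An ordered graph on n vertices: vertex set 'I_n with its natural order
   (every finite linearly ordered set is isomorphic to such), and a simple
   graph given by a symmetric irreflexive relation e. *)
Definition simple_graph (n : nat) (e : rel 'I_n) :=
  symmetric e /\ irreflexive e.

(* Key of the rotation of the order with threshold t: the vertices >= t
   come first (in order), then the vertices < t.  As t ranges over nat,
   these give exactly the rotations of the order (also of its restriction
   to any subset). *)
Definition rot_key (n t : nat) (x : 'I_n) : nat :=
  if t <= x then x - t else x + n.

Definition crosses (T : Type) (lt : rel T) (f g : T * T) : bool :=
  [&& lt f.1 g.1, lt g.1 f.2 & lt f.2 g.2].

(* A crossing sequence from p to q in the induced subgraph G[S] w.r.t. the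
   strict linear order lt on S; an edge is stored as (smaller end, larger end). *)
Definition crossing_seq_wrt (n : nat) (e : rel 'I_n) (S : {set 'I_n})
    (lt : rel 'I_n) (p q : 'I_n) : Prop :=
  exists s : seq ('I_n * 'I_n),
    [/\ s != [::] /\ uniq s,
        all (fun f => [&& f.1 \in S, f.2 \in S, lt f.1 f.2 & e f.1 f.2]) s,
        (head (p, p) s).1 = p, (last (q, q) s).2 = q
      & sorted (crosses lt) s].

Definition crossing_seq (n : nat) (e : rel 'I_n) (S : {set 'I_n}) (p q : 'I_n) : Prop :=
  if p < q then crossing_seq_wrt e S (fun x y => x < y) p q
  else exists t : nat, rot_key t p < rot_key t q /\
         crossing_seq_wrt e S (fun x y => rot_key t x < rot_key t y) p q.

Definition in_H (n : nat) (e : rel 'I_n) (S : {set 'I_n}) : Prop :=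
  exists p q : 'I_n, [/\ p \in S /\ q \in S, p != q, ~~ e p q,
                        crossing_seq e S p q & crossing_seq e S q p].

Definition H_free (n : nat) (e : rel 'I_n) : Prop :=
  forall S : {set 'I_n}, ~ in_H e S.

Definition capped_on (n : nat) (e : rel 'I_n) (X : {set 'I_n}) : Prop :=
  forall a b c d : 'I_n, a \in X -> b \in X -> c \in X -> d \in X ->
    a < b -> b < c -> c < d -> e a c -> e b d -> e a d.

(* Main.v *)
Require Import Defs.
From mathcomp Require Import all_boot.
From mathcomp Require Import zify.

Theorem lemma4p1 (n : nat) (e : rel 'I_n) :
  simple_graph e -> H_free e ->
  forall u v : 'I_n, u < v -> e u v ->
  capped_on e [set x | [|| x == u, x == v | [&& u < x, x < v, e u x & e x v]]].
Proof.
move=> [esym eirr] Hf u v uv euv a b c d.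
rewrite !inE => Ha _ _ Hd ab bc cd eac ebd.
case Ead: (e a d) => //; exfalso.
have ad : a < d by apply: ltn_trans ab (ltn_trans bc cd).
have [ua eua eav] : [/\ u < a, e u a & e a v].
  case/or3P: Ha => [/eqP Eau | /eqP Eav | /and4P[? ? ? ?]]; last by [].
  - subst a; case/or3P: Hd => [/eqP Ed | /eqP Ed | /and4P[? ? Hh ?]].
    + subst d; exfalso; lia.
    + by subst d; rewrite euv in Ead.
    + by rewrite Hh in Ead.
  - exfalso; case/or3P: Hd => [/eqP Ed | /eqP Ed | /and4P[? ? ? ?]]; subst; lia.
have [dv eud edv] : [/\ d < v, e u d & e d v].
  case/or3P: Hd => [/eqP Ed | /eqP Ed | /and4P[H1 H2 H3 H4]]; last by split.
  - subst d; exfalso; clear Ha; lia.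
  - by subst d; rewrite eav in Ead.
have vn : v < n by apply: ltn_ord.
clear Ha Hd.
apply: (Hf [set: 'I_n]); exists a, d; split.
- by rewrite !inE.
- by rewrite neq_ltn ad.
- by rewrite Ead.
- rewrite /crossing_seq ad; exists [:: (a, c); (b, d)].
  split => //=.
  + split => //; rewrite !inE andbT; apply/negP => /eqP [E _]; subst; lia.
  + rewrite !inE eac ebd /= andbT; apply/andP; split; lia.
  + rewrite andbT /crosses /=; apply/and3P; split; lia.
- rewrite /crossing_seq ltnNge (ltnW ad) /=; exists d.
  have k1 : rot_key d d = 0 by rewrite /rot_key leqnn subnn.
  have k2 : rot_key d v = v - d by rewrite /rot_key (ltnW dv).
  have k3 : rot_key d u = u + n by rewrite /rot_key leqNgt (ltn_trans ua ad).
  have k4 : rot_key d a = a + n by rewrite /rot_key leqNgt ad.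
  split; first by rewrite k1 k4; lia.
  exists [:: (d, u); (v, a)]; split => //=.
  + split => //; rewrite !inE andbT; apply/negP => /eqP [E _]; subst; lia.
  + rewrite !inE k1 k2 k3 k4 (esym d u) eud (esym v a) eav /=; apply/andP; split; lia.
  + rewrite andbT /crosses /= k1 k2 k3 k4; apply/and3P; split; lia.
Qed.
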